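(* Let $\mathbb{X}$ be a set, $E\subset\mathbb{R}^{\mathbb{X}}$ a real vector subspace, $C=(E\cap[0,\infty)^{\mathbb{X}})\setminus\{0\}$, and $\Pi:E\to E/\mathcal{R}$ the canonical projection, where $f\mathcal{R}g$ iff $f=bg$ for some $b>0$. For $\bar f,\bar g\in\Pi(C)$ set $d(\bar f,\bar g)=\frac{1-m(f,g)}{1+m(f,g)}$ where $f\in\bar f$, $g\in\bar g$. Then $d$ is well defined (independent of the choice of $f\in\bar f,g\in\bar g$), is a distance on $\Pi(C)$, and satisfies $d\le 1$.
   Context: The order on $\mathbb{R}^{\mathbb{X}}$ is pointwise. For $f,g\in C$, $\aleph(f,g)=\sup\{b\ge0\mid bf\le g\}$ and $m(f,g)=\aleph(f,g)\aleph(g,f)$. *)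

(* Defs.v *)
From mathcomp Require Import all_boot all_order all_algebra.
From mathcomp Require Import all_classical all_reals.
Set Implicit Arguments. Unset Strict Implicit. Unset Printing Implicit Defensive.
Import Order.TTheory GRing.Theory Num.Theory.
Local Open Scope classical_set_scope.
Local Open Scope ring_scope.

Section Defs.
Variables (R : realType) (X : Type).

Definition is_subspace (E : set (X -> R)) : Prop :=
  E (fun _ => 0) /\
  (forall f g, E f -> E g -> E (fun x => f x + g x)) /\
  (forall (a : R) f, E f -> E (fun x => a * f x)).

Definition inC (E : set (X -> R)) (f : X -> R) : Prop :=
  E f /\ (forall x, 0 <= f x) /\ f <> (fun _ => 0).

Definition relR (f g : X -> R) : Prop :=
  exists b : R, 0 < b /\ f = (fun x => b * g x).

Definition aleph (f g : X -> R) : R :=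
  sup [set b : R | 0 <= b /\ forall x, b * f x <= g x].

Definition mfg (f g : X -> R) : R := aleph f g * aleph g f.

(* d evaluated on representatives f, g *)
Definition dC (f g : X -> R) : R := (1 - mfg f g) / (1 + mfg f g).

End Defs.

(* Main.v *)
Require Import Defs.
From mathcomp Require Import all_boot all_order all_algebra.
From mathcomp Require Import all_classical all_reals.
From mathcomp Require Import ring lra.
Import Order.TTheory GRing.Theory Num.Theory.
Local Open Scope ring_scope.

Module Helpers.
Set Implicit Arguments. Unset Strict Implicit.
Local Open Scope classical_set_scope.
Section H.
Variables (R : realType) (X : Type).
Implicit Types f g h : X -> R.

Definition nn f := (forall x, 0 <= f x) /\ exists x, 0 < f x.

Lemma inC_nn E f : inC E f -> nn f.
Proof.
case=> _ [f0 fn]; split => //.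
apply: contrapT => hn; apply: fn; apply: funext => x.
apply/eqP; rewrite eq_le f0 andbT leNgt; apply/negP => hx; apply: hn; by exists x.
Qed.

Lemma aleph_props f g : nn f -> (forall x, 0 <= g x) ->
  [/\ 0 <= aleph f g, (forall x, aleph f g * f x <= g x) &
      (forall b, 0 <= b -> (forall x, b * f x <= g x) -> b <= aleph f g)].
Proof.
move=> [f0 [x0 fx0]] g0.
set S := [set b : R | 0 <= b /\ forall x, b * f x <= g x].
have S0 : S 0 by split => // x; rewrite mul0r.
have hub : has_ubound S.
  by exists (g x0 / f x0); move=> b [b0 hb]; rewrite ler_pdivlMr //; exact: hb.
have ub := ub_le_sup hub.
have up : forall b, 0 <= b -> (forall x, b * f x <= g x) -> b <= aleph f g.
  by move=> b b0 hb; apply: ub; split.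
split => //; first by apply: up => // x; rewrite mul0r.
move=> x; have := f0 x; rewrite le_eqVlt => /orP [/eqP <-|fx].
  by rewrite mulr0.
rewrite -ler_pdivlMr //; apply: ge_sup; first by exists 0.
by move=> b [b0 hb]; rewrite ler_pdivlMr //; exact: hb.
Qed.

Lemma nn_ge0 f : nn f -> forall x, 0 <= f x. Proof. by case. Qed.

Lemma nn_scale f b : 0 < b -> nn f -> nn (fun x => b * f x).
Proof.
move=> b0 [f0 [x fx]]; split; first by move=> y; rewrite mulr_ge0 // ltW.
by exists x; rewrite mulr_gt0.
Qed.

Lemma aleph_scale f g b c : nn f -> nn g -> 0 < b -> 0 < c ->
  aleph (fun x => b * f x) (fun x => c * g x) = c / b * aleph f g.
Proof.
move=> nf ng b0 c0.
have [a0 aP aM] := aleph_props nf (nn_ge0 ng).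
have [A0 AP AM] := aleph_props (nn_scale b0 nf) (nn_ge0 (nn_scale c0 ng)).
apply/le_anti/andP; split.
  rewrite -ler_pdivrMl ?divr_gt0 // invf_div; apply: aM.
    by rewrite mulr_ge0 // ltW ?divr_gt0.
  move=> x; have := AP x.
  have -> : b / c * aleph (fun x => b * f x) (fun x => c * g x) * f x =
    (aleph (fun x => b * f x) (fun x => c * g x) * (b * f x)) / c.
    by field; rewrite gt_eqF.
  by rewrite ler_pdivrMr // (mulrC (g x)).
apply: AM; first by rewrite mulr_ge0 // ltW ?divr_gt0.
move=> x.
have -> : c / b * aleph f g * (b * f x) = c * (aleph f g * f x).
  by field; rewrite gt_eqF.
by rewrite ler_pM2l.
Qed.

Lemma m_scale f g b c : nn f -> nn g -> 0 < b -> 0 < c ->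
  mfg (fun x => b * f x) (fun x => c * g x) = mfg f g.
Proof.
move=> nf ng b0 c0; rewrite /mfg !aleph_scale //.
by field; rewrite !gt_eqF.
Qed.

Lemma aleph_ge0 f g : nn f -> nn g -> 0 <= aleph f g.
Proof. by move=> nf ng; have [] := aleph_props nf (nn_ge0 ng). Qed.

Lemma m_ge0 f g : nn f -> nn g -> 0 <= mfg f g.
Proof. by move=> nf ng; rewrite mulr_ge0 // aleph_ge0. Qed.

Lemma m_le1 f g : nn f -> nn g -> mfg f g <= 1.
Proof.
move=> nf ng; have [a0 aP _] := aleph_props nf (nn_ge0 ng).
have [a0' aP' _] := aleph_props ng (nn_ge0 nf).
case: (nf) => _ [x fx].
have h1 := aP x; have h2 := aP' x.
have : mfg f g * f x <= f x.
  have -> : mfg f g * f x = aleph g f * (aleph f g * f x) by rewrite /mfg; ring.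
  apply: le_trans h2; exact: ler_wpM2l.
by rewrite -{2}(mul1r (f x)) ler_pM2r.
Qed.

Lemma m_trans f g h : nn f -> nn g -> nn h -> mfg f g * mfg g h <= mfg f h.
Proof.
move=> nf ng nh.
have [a1 P1 _] := aleph_props nf (nn_ge0 ng).
have [a2 P2 _] := aleph_props ng (nn_ge0 nh).
have [_ _ M3] := aleph_props nf (nn_ge0 nh).
have [b1 Q1 _] := aleph_props ng (nn_ge0 nf).
have [b2 Q2 _] := aleph_props nh (nn_ge0 ng).
have [_ _ N3] := aleph_props nh (nn_ge0 nf).
have e1 : aleph f g * aleph g h <= aleph f h.
  apply: M3; first by rewrite mulr_ge0.
  move=> x; apply: le_trans (P2 x).
  have -> : aleph f g * aleph g h * f x = aleph g h * (aleph f g * f x) by ring.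
  exact: ler_wpM2l.
have e2 : aleph h g * aleph g f <= aleph h f.
  apply: N3; first by rewrite mulr_ge0.
  move=> x; apply: le_trans (Q1 x).
  have -> : aleph h g * aleph g f * h x = aleph g f * (aleph h g * h x) by ring.
  exact: ler_wpM2l.
rewrite /mfg.
have -> : aleph f g * aleph g f * (aleph g h * aleph h g) =
  (aleph f g * aleph g h) * (aleph h g * aleph g f) by ring.
by apply: ler_pM => //; rewrite mulr_ge0.
Qed.

Lemma m_sym f g : mfg f g = mfg g f.
Proof. by rewrite /mfg mulrC. Qed.

Lemma m_eq1 f g : nn f -> nn g -> (mfg f g = 1 <-> relR f g).
Proof.
move=> nf ng; split.
  have [a0 aP _] := aleph_props nf (nn_ge0 ng).
  have [a0' aP' _] := aleph_props ng (nn_ge0 nf).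
  rewrite /mfg => e.
  have ap : 0 < aleph g f.
    by rewrite lt_neqAle a0' andbT; apply/eqP => h; move: e; rewrite -h mulr0 => /eqP; rewrite eq_sym oner_eq0.
  exists (aleph g f); split => //; apply: funext => x.
  apply/le_anti/andP; split; last exact: aP'.
  have := aP x; rewrite -(ler_pM2l ap) mulrA (mulrC (aleph g f)) e mul1r.
  done.
case=> b [b0 ->].
have [_ _ M1] := aleph_props (nn_scale b0 ng) (nn_ge0 ng).
have [_ _ M2] := aleph_props ng (nn_ge0 (nn_scale b0 ng)).
have h1 : b^-1 <= aleph (fun x => b * g x) g.
  apply: M1; first by rewrite invr_ge0 ltW.
  by move=> x; rewrite mulrA mulVf ?gt_eqF // mul1r.
have h2 : b <= aleph g (fun x => b * g x) by apply: M2 => //; exact: ltW.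
apply/le_anti/andP; split.
  by apply: m_le1 => //; exact: nn_scale.
rewrite /mfg -(mulVf (lt0r_neq0 b0)); apply: ler_pM => //.
  by rewrite invr_ge0 ltW.
exact: ltW.
Qed.

Lemma tanh_ineq (x y z : R) : 0 <= x <= 1 -> 0 <= y <= 1 -> x * y <= z ->
  (1 - z) / (1 + z) <= (1 - x) / (1 + x) + (1 - y) / (1 + y).
Proof.
move=> /andP [x0 x1] /andP [y0 y1] hz.
have z0 : 0 <= z by apply: le_trans hz; rewrite mulr_ge0.
have hxy : 0 <= x * y by rewrite mulr_ge0.
apply: (@le_trans _ _ ((1 - x * y) / (1 + x * y))).
  rewrite ler_pdivrMr ?ltr_wpDr // mulrAC ler_pdivlMr ?ltr_wpDr //.
  nra.
rewrite ler_pdivrMr ?ltr_wpDr //.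
have -> : ((1 - x) / (1 + x) + (1 - y) / (1 + y)) * (1 + x * y) =
  ((1 - x) * (1 + y) + (1 - y) * (1 + x)) * (1 + x * y) / ((1 + x) * (1 + y)).
  by field; apply/andP; split; rewrite gt_eqF // ltr_wpDr.
rewrite ler_pdivlMr ?mulr_gt0 ?ltr_wpDr //.
have : 0 <= (1 - x * y) * (1 - x) * (1 - y).
  by rewrite !mulr_ge0 // subr_ge0 // mulr_ile1.
nra.
Qed.

End H.
End Helpers.
Import Helpers.

Theorem mainTheorem2 (R : realType) (X : Type) (E : set (X -> R)) :
  is_subspace E ->
  (* well defined on classes *)
  (forall f f' g g', inC E f -> inC E f' -> inC E g -> inC E g' ->
     relR f f' -> relR g g' -> dC f g = dC f' g') /\
  (* nonnegativity and the bound d <= 1 *)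
  (forall f g, inC E f -> inC E g -> 0 <= dC f g /\ dC f g <= 1) /\
  (* identity of indiscernibles on Pi(C) *)
  (forall f g, inC E f -> inC E g -> (dC f g = 0 <-> relR f g)) /\
  (* symmetry *)
  (forall f g, inC E f -> inC E g -> dC f g = dC g f) /\
  (* triangle inequality *)
  (forall f g h, inC E f -> inC E g -> inC E h ->
     dC f h <= dC f g + dC g h).
Proof.
move=> _; split.
  move=> f f' g g' _ /inC_nn nf' _ /inC_nn ng' [b [b0 ->]] [c [c0 ->]].
  by rewrite /dC m_scale.
split.
  move=> f g /inC_nn nf /inC_nn ng; rewrite /dC.
  have m0 := m_ge0 nf ng; have m1 := m_le1 nf ng.
  have p : 0 < 1 + mfg f g by rewrite ltr_wpDr.
  split; first by rewrite divr_ge0 ?subr_ge0 // ltW.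
  rewrite ler_pdivrMr // mul1r; lra.
split.
  move=> f g /inC_nn nf /inC_nn ng; rewrite /dC -(m_eq1 nf ng).
  have m0 := m_ge0 nf ng.
  have p : 0 < 1 + mfg f g by rewrite ltr_wpDr.
  split; last by move=> ->; rewrite subrr mul0r.
  move/eqP; rewrite mulf_eq0 invr_eq0 (gt_eqF p) orbF subr_eq0 => /eqP <-.
  done.
split.
  by move=> f g _ _; rewrite /dC m_sym.
move=> f g h /inC_nn nf /inC_nn ng /inC_nn nh; rewrite /dC.
apply: tanh_ineq; last exact: m_trans.
  by rewrite m_ge0 ?m_le1.
by rewrite m_ge0 ?m_le1.
Qed.
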